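(* For every mixed graph $G$ without directed cycles, $\mathrm{cw}_{\mathrm m}(G)\le\mathrm{nd}_{\mathrm m}(G)+1$. Further, $\mathrm{cw}_{\mathrm m}$ does not bound $\mathrm{nd}_{\mathrm m}$.
   Context: A mixed graph $G$ consists of a finite vertex set $V(G)$, a set $E(G)$ of undirected edges and a set $A(G)$ of directed arcs; it is simple and contains no directed cycle. $N^+(v)$, $N^-(v)$, $N^{\mathrm u}(v)$ denote out-, in- and undirected neighbors. Vertices $u,v$ have the same mixed type if $N^{\mathrm u}(u)\setminus\{v\}=N^{\mathrm u}(v)\setminus\{u\}$, $N^-(u)=N^-(v)$, $N^+(u)=N^+(v)$; $\mathrm{nd}_{\mathrm m}(G)$ is the number of mixed types. The mixed cliquewidth $\mathrm{cw}_{\mathrm m}(G)$ is the minimum number of labels needed to construct $G$ using: create a new vertex with label $i$; disjoint union; $\eta_{i,j}$ ($i\ne j$): add an edge between every vertex labeled $i$ and every vertex labeled $j$; $\alpha_{i,j}$ ($i\ne j$): add an arc from every vertex labeled $i$ to every vertex labeled $j$; $\rho_{i\to j}$: rename label $i$ to $j$. A parameter $\alpha$ bounds $\beta$ if there is a computable $f$ with $\beta(G)\le f(\alpha(G))$ for all $G$ (here: all mixed graphs without directed cycles). *)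

(* Defs.v *)
From Stdlib Require Import ClassicalEpsilon.
From mathcomp Require Import all_boot.
Set Implicit Arguments. Unset Strict Implicit. Unset Printing Implicit Defensive.

Record mgraph (n : nat) := MGraph { medge : rel 'I_n; marc : rel 'I_n }.

Definition mixed_graph n (G : mgraph n) : Prop :=
  [/\ irreflexive (medge G), symmetric (medge G),
      (forall u v, ~~ (medge G u v && marc G u v)),
      (forall u v, marc G u v -> ~~ marc G v u) &
      irreflexive (marc G)] /\
  (forall u v, marc G u v -> ~~ connect (marc G) v u).

Definition same_mtype n (G : mgraph n) (u v : 'I_n) : bool :=
  [&& [forall w, ((w != u) && (w != v)) ==> (medge G u w == medge G v w)],
      [forall w, marc G w u == marc G w v] &
      [forall w, marc G u w == marc G v w]].

Definition ndm n (G : mgraph n) : nat :=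
  #|[set [set v | same_mtype G u v] | u : 'I_n]|.

Inductive cwexp :=
| CVert of nat
| CUnion of cwexp & cwexp
| CEta of nat & nat & cwexp
| CAlpha of nat & nat & cwexp
| CRen of nat & nat & cwexp.

(* Semantics: the vertices of t are 0 .. nv t - 1 (leaves, left to right). *)
Fixpoint nv (t : cwexp) : nat :=
  match t with
  | CVert _ => 1
  | CUnion a b => nv a + nv b
  | CEta _ _ a | CAlpha _ _ a | CRen _ _ a => nv a
  end.

Fixpoint lab (t : cwexp) (v : nat) : nat :=
  match t with
  | CVert i => i
  | CUnion a b => if v < nv a then lab a v else lab b (v - nv a)
  | CEta _ _ a | CAlpha _ _ a => lab a v
  | CRen i j a => if lab a v == i then j else lab a v
  end.

Fixpoint edg (t : cwexp) (u v : nat) : bool :=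
  match t with
  | CVert _ => false
  | CUnion a b =>
      if (u < nv a) && (v < nv a) then edg a u v
      else if (nv a <= u) && (nv a <= v) then edg b (u - nv a) (v - nv a)
      else false
  | CEta i j a =>
      [|| edg a u v, (lab a u == i) && (lab a v == j)
                   | (lab a u == j) && (lab a v == i)]
  | CAlpha _ _ a | CRen _ _ a => edg a u v
  end.

Fixpoint arcs (t : cwexp) (u v : nat) : bool :=
  match t with
  | CVert _ => false
  | CUnion a b =>
      if (u < nv a) && (v < nv a) then arcs a u v
      else if (nv a <= u) && (nv a <= v) then arcs b (u - nv a) (v - nv a)
      else false
  | CAlpha i j a => arcs a u v || ((lab a u == i) && (lab a v == j))
  | CEta _ _ a | CRen _ _ a => arcs a u v
  end.

Fixpoint kexp (k : nat) (t : cwexp) : bool :=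
  match t with
  | CVert i => i < k
  | CUnion a b => kexp k a && kexp k b
  | CEta i j a | CAlpha i j a => [&& i < k, j < k, i != j & kexp k a]
  | CRen i j a => [&& i < k, j < k & kexp k a]
  end.

Definition constructs n (G : mgraph n) (t : cwexp) : Prop :=
  nv t = n /\
  exists f : 'I_n -> 'I_n, injective f /\
    forall u v, medge G u v = edg t (f u) (f v) /\ marc G u v = arcs t (f u) (f v).

Definition cw_le n (G : mgraph n) (k : nat) : Prop :=
  exists t, kexp k t /\ constructs G t.

(* cw_m(G): the least k such that G has a k-expression
   (chosen by epsilon; well defined whenever G has some expression,
    i.e. whenever G is nonempty). *)
Definition cwm n (G : mgraph n) : nat :=
  epsilon (inhabits 0%N)
    (fun k => cw_le G k /\ forall k', cw_le G k' -> k <= k').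

(* Main.v *)
Require Import Defs.
From mathcomp Require Import all_boot.
From Stdlib Require Import Classical ClassicalEpsilon.
Set Implicit Arguments. Unset Strict Implicit. Unset Printing Implicit Defensive.

Definition bE (E : nat -> nat -> bool) (C : nat -> nat) v j :=
  has (fun w => (C w == j) && E v w) (iota 0 v).
Definition bA1 (A : nat -> nat -> bool) (C : nat -> nat) v j :=
  has (fun w => (C w == j) && A w v) (iota 0 v).
Definition bA2 (A : nat -> nat -> bool) (C : nat -> nat) v j :=
  has (fun w => (C w == j) && A v w) (iota 0 v).

Definition opstep k E A C v j t :=
  let t1 := if bE E C v j then CEta k j t else t in
  let t2 := if bA1 A C v j then CAlpha j k t1 else t1 in
  if bA2 A C v j then CAlpha k j t2 else t2.

Definition ops k E A C v l t := foldr (opstep k E A C v) t l.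

Lemma ops_nv k E A C v l t : nv (ops k E A C v l t) = nv t.
Proof.
elim: l => [|j l IH] //=; rewrite /opstep.
by case: bE; case: bA1; case: bA2.
Qed.

Lemma ops_lab k E A C v l t x : lab (ops k E A C v l t) x = lab t x.
Proof.
elim: l => [|j l IH] //=; rewrite /opstep.
by case: bE; case: bA1; case: bA2.
Qed.

Lemma ops_edg k E A C v l t x y : edg (ops k E A C v l t) x y =
  edg t x y || has (fun j => bE E C v j &&
     (((lab t x == k) && (lab t y == j)) || ((lab t x == j) && (lab t y == k)))) l.
Proof.
elim: l => [|j l IH] /=; first by rewrite orbF.
rewrite /opstep.
case: bE; case: bA1; case: bA2 => /=; rewrite ?ops_lab IH;
by case: (lab t x == k); case: (lab t y == j); case: (lab t x == j); case: (lab t y == k);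
  rewrite /= ?andbF ?andbT ?orbT ?orbF ?orbA.
Qed.

Lemma ops_arcs k E A C v l t x y : arcs (ops k E A C v l t) x y =
  arcs t x y || has (fun j => (bA1 A C v j && (lab t x == j) && (lab t y == k)) ||
                               (bA2 A C v j && (lab t x == k) && (lab t y == j))) l.
Proof.
elim: l => [|j l IH] /=; first by rewrite orbF.
rewrite /opstep.
case: bE; case: bA1; case: bA2 => /=; rewrite ?ops_lab IH;
by case: (lab t x == k); case: (lab t y == j); case: (lab t x == j); case: (lab t y == k);
  rewrite /= ?andbF ?andbT ?orbT ?orbF ?orbA.
Qed.

Lemma ops_kexp k E A C v l t : kexp k.+1 t -> all (fun j => j < k) l ->
  kexp k.+1 (ops k E A C v l t).
Proof.
move=> Ht; elim: l => [|j l IH] //= /andP[jk Hl]; rewrite /opstep.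
have jk1 : j < k.+1 by apply: ltnW.
have kj : k != j by rewrite eq_sym ltn_eqF.
by case: bE; case: bA1; case: bA2 => /=; rewrite ?jk1 ?kj ?ltnSn /= ?eqxx ?(eq_sym j k) ?kj ?IH.
Qed.

Lemma has_iota_single k c (P : pred nat) : c < k ->
  (forall j, j < k -> P j -> j = c) -> has P (iota 0 k) = P c.
Proof.
move=> ck H; apply/hasP/idP => [[j]|Pc].
  by rewrite mem_iota add0n => /andP[_ jk] Pj; rewrite -(H j jk Pj).
by exists c => //; rewrite mem_iota add0n ck.
Qed.

Lemma has_iota_none k (P : pred nat) :
  (forall j, j < k -> ~~ P j) -> has P (iota 0 k) = false.
Proof.
move=> H; apply/hasP => [[j]]; rewrite mem_iota add0n => /andP[_ jk].
by apply/negP/H.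
Qed.

Fixpoint build k E A C (m : nat) : cwexp :=
  match m with
  | 0 => CVert (C 0)
  | m'.+1 => CRen k (C m) (ops k E A C m (iota 0 k) (CUnion (build k E A C m') (CVert k)))
  end.

Lemma build_inv k E A C n :
  (forall x, x < n -> C x < k) ->
  (forall x y, x < n -> y < n -> E x y = E y x) ->
  (forall x, x < n -> E x x = false /\ A x x = false) ->
  (forall z x y, z < n -> x < z -> y < z -> C x = C y ->
      [/\ E z x = E z y, A z x = A z y & A x z = A y z]) ->
  forall m, m < n ->
  [/\ nv (build k E A C m) = m.+1, kexp k.+1 (build k E A C m),
      (forall x, x <= m -> lab (build k E A C m) x = C x) &
      (forall x y, x <= m -> y <= m ->
         edg (build k E A C m) x y = E x y /\ arcs (build k E A C m) x y = A x y)].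
Proof.
move=> HC Hsym Hirr Hsame.
elim=> [|m IH] Hm.
  split => //=.
  - by rewrite ltnS ltnW // HC.
  - by move=> x; rewrite leqn0 => /eqP ->.
  - move=> x y; rewrite !leqn0 => /eqP -> /eqP ->.
    by have [-> ->] := Hirr 0 Hm.
have Hm' : m < n by apply: ltnW.
have [IHnv IHk IHlab IHe] := IH Hm'.
set v := m.+1.
set u := CUnion (build k E A C m) (CVert k).
have Hv : v < n by [].
have labu : forall x, x <= v -> lab u x = if x < v then C x else k.
  move=> x xv /=; rewrite IHnv; case: ifP => // xm; by rewrite IHlab // -ltnS.
have Ck : forall x, x < v -> (C x == k) = false.
  by move=> x xv; rewrite ltn_eqF // HC // (ltn_trans xv Hv).
have bEv : forall y, y < v -> bE E C v (C y) = E v y.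
  move=> y yv; apply/hasP/idP => [[w]|Evy].
    rewrite mem_iota add0n => /andP[_ wv] /andP[/eqP Cw Evw].
    by have [<- _ _] := Hsame v w y Hv wv yv Cw.
  by exists y; rewrite ?mem_iota ?add0n ?yv ?eqxx.
have bA1v : forall y, y < v -> bA1 A C v (C y) = A y v.
  move=> y yv; apply/hasP/idP => [[w]|Evy].
    rewrite mem_iota add0n => /andP[_ wv] /andP[/eqP Cw Evw].
    by have [_ _ <-] := Hsame v w y Hv wv yv Cw.
  by exists y; rewrite ?mem_iota ?add0n ?yv ?eqxx.
have bA2v : forall y, y < v -> bA2 A C v (C y) = A v y.
  move=> y yv; apply/hasP/idP => [[w]|Evy].
    rewrite mem_iota add0n => /andP[_ wv] /andP[/eqP Cw Evw].
    by have [_ <- _] := Hsame v w y Hv wv yv Cw.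
  by exists y; rewrite ?mem_iota ?add0n ?yv ?eqxx.
split.
- by rewrite /= ops_nv /= IHnv addn1.
  have HCv := HC v Hv; rewrite /= ltnSn /= ltnS (ltnW HCv) /=.
  apply: ops_kexp => /=; first by rewrite IHk ltnSn.
  by apply/allP => j; rewrite mem_iota add0n.
- move=> x xv /=; rewrite ops_lab labu //.
  case: ltnP => xv'; first by rewrite Ck.
  by rewrite eqxx; have -> : x = v by apply/eqP; rewrite eqn_leq xv.
move=> x y xv yv.
rewrite /= ops_edg ops_arcs !labu //.
have Hlt : forall z, z <= v -> z < v \/ z = v.
  by move=> z; rewrite leq_eqVlt => /orP[/eqP ->|]; [right|left].
have Hnk : forall j, j < k -> (k == j) = false by move=> j jk; rewrite eq_sym ltn_eqF.
case: (Hlt x xv) => [xl|->]; case: (Hlt y yv) => [yl|->]; rewrite ?xl ?yl ?ltnn.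
- rewrite /= IHnv xl yl /=.
  have [-> ->] := IHe x y (xl : x <= m) (yl : y <= m).
  split; rewrite has_iota_none ?orbF // => j jk; by rewrite !Ck ?andbF.
- have Cxk : C x < k := HC x (ltn_trans xl Hv).
  rewrite /= IHnv xl ltnn /= !if_same /= eqxx Ck // ?andbT ?andbF ?orbF /=.
  split.
    rewrite (@has_iota_single k (C x) _ Cxk); last by move=> j jk /and3P[_ /eqP].
    by rewrite eqxx andbT bEv // andbT Hsym // (ltn_trans xl Hv).
  rewrite (@has_iota_single k (C x) _ Cxk); last first.
    by move=> j jk; rewrite andbF orbF andbT => /andP[_ /eqP].
  by rewrite eqxx andbF orbF !andbT bA1v.
- have Cyk : C y < k := HC y (ltn_trans yl Hv).
  rewrite /= IHnv yl ltnn /= !if_same /= eqxx Ck // ?andbT ?andbF ?orbF /=.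
  split.
    rewrite (@has_iota_single k (C y) _ Cyk); last first.
      by move=> j jk; rewrite andbF orbF => /andP[_ /eqP].
    by rewrite eqxx orTb andbT bEv.
  rewrite (@has_iota_single k (C y) _ Cyk); last first.
    by move=> j jk; rewrite Hnk // andbF /= => /andP[_ /eqP].
  by rewrite eqxx Hnk // !andbT andbF bA2v.
- rewrite /= IHnv ltnn leqnn /=.
  have [-> ->] := Hirr v Hv.
  by split; rewrite has_iota_none // => j jk; rewrite eqxx Hnk // ?andbF.
Qed.

Lemma gen_cw n (G : mgraph n.+1) k (C : nat -> nat) :
  (forall x, x < n.+1 -> C x < k) ->
  symmetric (medge G) -> irreflexive (medge G) -> irreflexive (marc G) ->
  (forall z x y : 'I_n.+1, x < z -> y < z -> C x = C y ->
     [/\ medge G z x = medge G z y, marc G z x = marc G z y & marc G x z = marc G y z]) ->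
  cw_le G k.+1.
Proof.
move=> HC Hsym Hirr Hirra Hsame.
pose E x y := medge G (inord x) (inord y).
pose A x y := marc G (inord x) (inord y).
have [] := @build_inv k E A C n.+1 HC _ _ _ n (ltnSn n).
- by move=> x y _ _; rewrite /E Hsym.
- by move=> x _; rewrite /E /A Hirr Hirra.
- move=> z x y zn xz yz Cxy.
  have := Hsame (inord z) (inord x) (inord y).
  rewrite !inordK ?(ltn_trans xz zn) ?(ltn_trans yz zn) //.
  by move=> /(_ xz yz Cxy).
move=> Hnv Hk _ He.
exists (build k E A C n); split => //; split => //.
exists id; split => // u v.
have [-> ->] := He u v (ltn_ord u) (ltn_ord v).
by rewrite /E /A !inord_val.
Qed.

Lemma least_ex (P : nat -> Prop) k : P k -> exists m, P m /\ forall k', P k' -> m <= k'.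
Proof.
elim: k {-2}k (leqnn k) => [|k IH] j.
  rewrite leqn0 => /eqP -> P0; exists 0; split => // k' _.
move=> jk Pj.
case: (classic (exists i, i < j /\ P i)) => [[i [ij Pi]]|Hn].
  by apply: (IH i) => //; rewrite -ltnS (leq_trans ij jk).
exists j; split => // k' Pk'; rewrite leqNgt; apply/negP => kj.
by apply: Hn; exists k'.
Qed.

Lemma cwm_le n (G : mgraph n) K : cw_le G K -> cw_le G (cwm G) /\ cwm G <= K.
Proof.
move=> HK.
have [m Hm] := least_ex HK.
have := epsilon_spec (inhabits 0) (fun k => cw_le G k /\ forall k', cw_le G k' -> k <= k')
  (ex_intro _ m Hm).
rewrite -/(cwm G) => [[H1 H2]]; split => //; exact: H2.
Qed.

Lemma same_refl n (G : mgraph n) u : same_mtype G u u.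
Proof.
apply/and3P; split; apply/forallP => w //; by rewrite eqxx ?implybT.
Qed.

Lemma part1 n (G : mgraph n) : 0 < n -> mixed_graph G -> cwm G <= ndm G + 1.
Proof.
case: n G => [|n] G // _ [[Hirr Hsym _ _ Hirra] _].
pose cls (u : 'I_n.+1) := [set v | same_mtype G u v].
pose S := [set cls u | u : 'I_n.+1].
pose C x := index (cls (inord x)) (enum S).
have inS : forall u, cls u \in enum S by move=> u; rewrite mem_enum imset_f.
have Hcw : cw_le G (#|S|).+1.
  apply: (@gen_cw n G #|S| C).
  - by move=> x _; rewrite /C cardE index_mem.
  - exact: Hsym.
  - exact: Hirr.
  - exact: Hirra.
  move=> z x y xz yz; rewrite /C !inord_val => Cxy.
  have ecl : cls x = cls y.
    by rewrite -(nth_index (cls x) (inS x)) Cxy nth_index.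
  have : y \in cls x by rewrite ecl inE same_refl.
  rewrite inE => /and3P[/forallP H1 /forallP H2 /forallP H3].
  have zx : z != x by rewrite neq_ltn xz orbT.
  have zy : z != y by rewrite neq_ltn yz orbT.
  move: (H1 z) (H2 z) (H3 z); rewrite zx zy /= => /eqP e1 /eqP e2 /eqP e3.
  by split => //; rewrite Hsym e1 Hsym.
have [_ H] := cwm_le Hcw.
by rewrite addn1.
Qed.

Definition tour n : mgraph n := MGraph (fun _ _ => false) (fun u v : 'I_n => u < v).

Lemma path_le n (a : 'I_n) p : path (marc (tour n)) a p -> a <= last a p.
Proof.
elim: p a => [|b p IH] a //= /andP[ab Hp].
by apply: leq_trans (IH b Hp); apply: ltnW.
Qed.

Lemma tour_mixed n : mixed_graph (tour n).
Proof.
split; first split => //.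
- by move=> u v /= uv; rewrite -leqNgt ltnW.
- by move=> u /=; rewrite ltnn.
move=> u v /= uv; apply/negP => /connectP [p Hp e].
have := path_le Hp; rewrite -e leqNgt => /negP; apply.
exact: uv.
Qed.

Lemma tour_ndm n : ndm (tour n) = n.
Proof.
rewrite /ndm card_imset ?card_ord // => u v.
move/setP => /(_ v); rewrite !inE same_refl => /and3P[_ /forallP H2 _].
case: (ltngtP u v) => h.
- by move: (H2 u) => /=; rewrite ltnn h.
- by move: (H2 v) => /=; rewrite ltnn h.
- by apply: val_inj.
Qed.

Lemma tour_cw n : cw_le (tour n.+1) 2.
Proof.
apply: (@gen_cw n (tour n.+1) 1 (fun _ => 0)) => //=.
- by move=> u; rewrite ltnn.
- move=> z x y xz yz _; split => //.
  + by rewrite ltnNge (ltnW xz) ltnNge (ltnW yz).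
  + by rewrite xz yz.
Qed.

Lemma part2 : ~ (exists f : nat -> nat,
       forall (n : nat) (G : mgraph n), mixed_graph G -> ndm G <= f (cwm G)).
Proof.
move=> [f Hf].
pose N := f 0 + f 1 + f 2.
have := Hf N.+1 (tour N.+1) (tour_mixed _).
rewrite tour_ndm.
have [_ ] := cwm_le (tour_cw N).
case: (cwm (tour N.+1)) => [|[|[|c]]] // _; rewrite ltnNge /N.
- by rewrite -addnA leq_addr.
- by rewrite addnAC leq_addl.
- by rewrite leq_addl.
Qed.

Theorem mainTheorem17 :
  (forall (n : nat) (G : mgraph n), 0 < n -> mixed_graph G ->
      cwm G <= ndm G + 1)
  /\
  ~ (exists f : nat -> nat,
       forall (n : nat) (G : mgraph n), mixed_graph G -> ndm G <= f (cwm G)).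
Proof.
split; [exact: part1 | exact: part2].
Qed.
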